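(* Let $G$ be a finite simple graph with at least one edge. Then $\mathrm{v}(I(G))\le\beta(G)$. Moreover, $\mathrm{v}(I(G))=\beta(G)$ if and only if every connected component of $G$ that has at least one edge is a star graph $K_{1,m}$ for some $m\ge1$.
   Context: For a graph $G$, $R=\mathbb{K}[V(G)]$ is the polynomial ring over a field $\mathbb{K}$ in the vertices, and $I(G)=(x_ix_j\mid\{x_i,x_j\}\in E(G))$ is the edge ideal. The v-number of a proper graded ideal $I\subseteq R$ is $\mathrm{v}(I)=\min\{d\ge0\mid\exists f\in R_d,\ \mathfrak p\in\mathrm{Ass}(I),\ I:(f)=\mathfrak p\}$. A vertex cover of $G$ is a set $C\subseteq V(G)$ meeting every edge; $\beta(G)$ is the minimum size of a vertex cover. The star graph $K_{1,m}$ has vertices $x_0,x_1,\ldots,x_m$ and edges $\{x_0,x_i\}$, $1\le i\le m$. *)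

(* Defs.v *)
From HB Require Import structures.
From mathcomp Require Import all_boot all_order all_algebra.
From mathcomp Require Import mpoly.
Set Implicit Arguments. Unset Strict Implicit. Unset Printing Implicit Defensive.
Import GRing.Theory.
Local Open Scope ring_scope.

(* A graph on vertex set 'I_n = {x_0,...,x_{n-1}} is given by a relation e;
   it is a finite simple graph when e is symmetric and irreflexive. *)
Definition simple_graph (n : nat) (e : rel 'I_n) : Prop :=
  (forall x y, e x y = e y x) /\ (forall x, ~~ e x x).

Definition pset (K : fieldType) (n : nat) := {mpoly K[n]} -> Prop.

Definition edge_ideal (K : fieldType) (n : nat) (e : rel 'I_n) : pset K n :=
  fun f => exists g : 'I_n -> 'I_n -> {mpoly K[n]},
    f = \sum_(i < n) \sum_(j < n | e i j) g i j * ('X_i * 'X_j).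

Definition is_ideal (K : fieldType) (n : nat) (P : pset K n) : Prop :=
  P 0 /\ (forall a b, P a -> P b -> P (a + b)) /\ (forall r a, P a -> P (r * a)).

Definition is_prime_ideal (K : fieldType) (n : nat) (P : pset K n) : Prop :=
  is_ideal P /\ ~ P 1 /\ (forall a b, P (a * b) -> P a \/ P b).

Definition colon (K : fieldType) (n : nat) (I : pset K n) (f : {mpoly K[n]}) : pset K n :=
  fun g => I (g * f).

Definition Ass (K : fieldType) (n : nat) (I : pset K n) (P : pset K n) : Prop :=
  is_prime_ideal P /\ exists f : {mpoly K[n]}, forall g, P g <-> colon I f g.

Definition vnum_at (K : fieldType) (n : nat) (I : pset K n) (d : nat) : Prop :=
  exists f : {mpoly K[n]}, f \is d.-homog /\
    exists P : pset K n, Ass I P /\ (forall g, colon I f g <-> P g).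

Definition is_vnumber (K : fieldType) (n : nat) (I : pset K n) (v : nat) : Prop :=
  vnum_at I v /\ forall d, vnum_at I d -> (v <= d)%N.

Definition vertex_cover (n : nat) (e : rel 'I_n) (C : {set 'I_n}) : bool :=
  [forall i, forall j, e i j ==> (i \in C) || (j \in C)].

Definition beta (n : nat) (e : rel 'I_n) : nat :=
  \big[minn/n]_(C : {set 'I_n} | vertex_cover e C) #|C|.

Definition component (n : nat) (e : rel 'I_n) (x : 'I_n) : {set 'I_n} :=
  [set y | connect e x y].

Definition has_edge_in (n : nat) (e : rel 'I_n) (C : {set 'I_n}) : Prop :=
  exists y z, [/\ y \in C, z \in C & e y z].

(* The induced graph on C is a star K_{1,m} (m = #|C| - 1): some center c in C
   such that two vertices of C are adjacent iff exactly one of them is c.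
   (m >= 1 is automatic once C contains an edge.) *)
Definition is_star_on (n : nat) (e : rel 'I_n) (C : {set 'I_n}) : Prop :=
  exists2 c, c \in C &
    forall y z, y \in C -> z \in C -> e y z = ((y == c) != (z == c)).

(* Main.v *)
Require Import Defs.
From HB Require Import structures.
From mathcomp Require Import all_boot all_order all_algebra.
From mathcomp Require Import mpoly.
From mathcomp Require Import zify.
From Stdlib Require Import Classical.
Set Implicit Arguments. Unset Strict Implicit. Unset Printing Implicit Defensive.
Import GRing.Theory.
Local Open Scope ring_scope.

Section Alg.
Variables (K : fieldType) (n : nat) (e : rel 'I_n).
Hypothesis esym : forall x y, e x y = e y x.
Hypothesis eirr : forall x, ~~ e x x.

Local Notation I := (@edge_ideal K n e).

Definition em (m : 'X_{1..n}) : bool :=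
  [exists i, exists j, [&& e i j, (0 < m i)%N & (0 < m j)%N]].

Lemma I0 : I 0.
Proof. exists (fun _ _ => 0); rewrite big1 // => i _; rewrite big1 // => j _; by rewrite mul0r. Qed.

Lemma ID a b : I a -> I b -> I (a + b).
Proof.
move=> [g ->] [h ->]; exists (fun i j => g i j + h i j).
rewrite -big_split; apply: eq_bigr => i _; rewrite -big_split; apply: eq_bigr => j _.
by rewrite mulrDl.
Qed.

Lemma IM r a : I a -> I (r * a).
Proof.
move=> [g ->]; exists (fun i j => r * g i j).
rewrite mulr_sumr; apply: eq_bigr => i _; rewrite mulr_sumr; apply: eq_bigr => j _.
by rewrite mulrA.
Qed.

Lemma Igen r i j : e i j -> I (r * ('X_i * 'X_j)).
Proof.
move=> eij; exists (fun a b => if (a == i) && (b == j) then r else 0).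
rewrite (bigD1 i) //= (bigD1 j) //= !eqxx /= big1 ?addr0; last first.
  by move=> b /andP[_ /negbTE ->]; rewrite mul0r.
rewrite [X in _ = _ + X]big1 ?addr0 // => a /negbTE ane; rewrite big1 // => b _; by rewrite ane mul0r.
Qed.

Lemma I_sub a : I a -> forall m, m \in msupp a -> em m.
Proof.
move=> [g ->]; elim/big_ind: _ => [|x y Hx Hy|i _].
- by move=> m; rewrite msupp0.
- by move=> m /msuppD_le; rewrite mem_cat => /orP[/Hx|/Hy].
elim/big_ind: _ => [|x y Hx Hy|j eij].
- by move=> m; rewrite msupp0.
- by move=> m /msuppD_le; rewrite mem_cat => /orP[/Hx|/Hy].
move=> m; rewrite -mpolyXD (perm_mem (msuppMX _ _)) => /mapP [m0 _ ->].
apply/existsP; exists i; apply/existsP; exists j.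
by rewrite eij !mnmDE !mnm1E !eqxx /= !addn_gt0 /= ?orbT.
Qed.

Lemma Isum (s : seq 'X_{1..n}) (F : 'X_{1..n} -> {mpoly K[n]}) :
  (forall m, m \in s -> I (F m)) -> I (\sum_(m <- s) F m).
Proof.
move=> H; rewrite big_seq; elim/big_ind: _ => //; [exact: I0 | exact: ID].
Qed.

Lemma Imono c m : em m -> I (c *: 'X_[m]).
Proof.
case/existsP=> i /existsP [j /and3P [eij mi mj]].
have ij : i != j by apply/eqP => ij; rewrite ij (negbTE (eirr j)) in eij.
pose m' := [multinom (m k - (i == k) - (j == k))%N | k < n].
have -> : m = (m' + (U_(i) + U_(j)))%MM.
  apply/mnmP=> k; rewrite !mnmDE !mnmE.
  case: (i =P k) => [ik|_]; case: (j =P k) => [jk|_] /=.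
  - by move: ij; rewrite ik jk eqxx.
  - by rewrite -ik; move: mi; clear; lia.
  - by rewrite -jk; move: mj; clear; lia.
  - by clear; lia.
rewrite mpolyXD mpolyXD scalerAl; exact: Igen.
Qed.

Lemma I_sup a : (forall m, m \in msupp a -> em m) -> I a.
Proof. by move=> H; rewrite (mpolyE a); apply: Isum => m /H /Imono. Qed.

Lemma I_char a : I a <-> (forall m, m \in msupp a -> em m).
Proof. by split; [exact: I_sub | exact: I_sup]. Qed.

Lemma colonX_char (mu : 'X_{1..n}) g :
  colon I 'X_[mu] g <-> (forall m, m \in msupp g -> em (mu + m)%MM).
Proof.
rewrite /colon I_char; split=> H m.
  by move=> mg; apply: H; rewrite (perm_mem (msuppMX _ _)); apply: map_f.
by rewrite (perm_mem (msuppMX _ _)) => /mapP [m0 /H ? ->].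
Qed.


Definition stable (T : {set 'I_n}) := [forall t1 in T, forall t2 in T, ~~ e t1 t2].
Definition NS (T : {set 'I_n}) := [set x | [exists t in T, e x t]].
Definition mT (T : {set 'I_n}) : 'X_{1..n} := [multinom ((i \in T) : nat) | i < n].

Lemma em_shift T m : stable T -> vertex_cover e (NS T) ->
  em (mT T + m)%MM = [exists y in NS T, (0 < m y)%N].
Proof.
move=> /forallP st /forallP cov; apply/idP/idP.
  case/existsP=> i /existsP [j /and3P [eij]]; rewrite !mnmDE !mnmE.
  case iT: (i \in T); case jT: (j \in T) => /= Hi Hj.
  - by have := st i; rewrite iT /= => /forallP /(_ j); rewrite jT eij.
  - apply/existsP; exists j; rewrite Hj andbT inE; apply/existsP; exists i.
    by rewrite iT esym.
  - apply/existsP; exists i; rewrite Hi andbT inE; apply/existsP; exists j.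
    by rewrite jT.
  - have := cov i => /forallP /(_ j); rewrite eij /= => /orP [iN|jN].
      by apply/existsP; exists i; rewrite iN.
    by apply/existsP; exists j; rewrite jN.
case/existsP=> y /andP []; rewrite inE => /existsP [t /andP [tT eyt]] my.
apply/existsP; exists y; apply/existsP; exists t.
by rewrite eyt !mnmDE !mnmE tT addn_gt0 my orbT.
Qed.

Definition hN T (i : 'I_n) : {mpoly K[n]} := if i \in NS T then 0 else 'X_i.
Definition phi T := mmap (@mpolyC n K) (hN T).

Lemma mmap1_hN T m :
  mmap1 (hN T) m = if [exists y in NS T, (0 < m y)%N] then 0 else 'X_[m].
Proof.
case: ifP => [/existsP [y /andP [yN my]]|H].
  rewrite /mmap1 (bigD1 y) //= /hN yN expr0n; move: my; rewrite lt0n => /negbTE ->; by rewrite mul0r.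
rewrite -mmap1_id; apply: eq_bigr => i _; rewrite /hN.
case: ifP => // iN; have : ~~ (0 < m i)%N.
  by apply: contraFN H => mi; apply/existsP; exists i; rewrite iN.
by rewrite -eqn0Ngt => /eqP ->; rewrite !expr0.
Qed.

Lemma phi_char T g :
  phi T g = 0 <-> (forall m, m \in msupp g -> [exists y in NS T, (0 < m y)%N]).
Proof.
split; last first.
  move=> H; rewrite /phi /mmap big_seq big1 // => m /H; rewrite mmap1_hN => ->.
  by rewrite mulr0.
move=> H m mg; case: (boolP [exists y in NS T, (0 < m y)%N]) => // Hm.
have : (phi T g)@_m = g@_m.
  rewrite /phi /mmap raddf_sum /= (bigD1_seq m) ?msupp_uniq //= big1.
    by rewrite addr0 mmap1_hN (negbTE Hm) mul_mpolyC mcoeffZ mcoeffX eqxx mulr1.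
  move=> m' m'm; rewrite mmap1_hN; case: ifP => _; first by rewrite mulr0 mcoeff0.
  by rewrite mul_mpolyC mcoeffZ mcoeffX (negbTE m'm) mulr0.
by rewrite H mcoeff0 => E; move: mg; rewrite mcoeff_msupp -E eqxx.
Qed.


Lemma colon_phi T g : stable T -> vertex_cover e (NS T) ->
  colon I 'X_[mT T] g <-> phi T g = 0.
Proof.
move=> st cov; rewrite colonX_char phi_char.
by split=> H m /H; rewrite em_shift.
Qed.

Lemma mdeg_mT T : mdeg (mT T) = #|T|.
Proof.
rewrite mdegE -sum1_card [RHS]big_mkcond /=; apply: eq_bigr => i _.
by rewrite mnmE; case: (i \in T).
Qed.

Lemma L2 T : stable T -> vertex_cover e (NS T) -> vnum_at I #|T|.
Proof.
move=> st cov; exists 'X_[mT T]; split.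
  by rewrite dhomogX; apply/eqP; exact: mdeg_mT.
have E := colon_phi _ st cov.
exists (colon I 'X_[mT T]); split; last by [].
split; last by exists 'X_[mT T].
split; [split; [|split]|split].
- by apply/E; rewrite /phi rmorph0.
- by move=> a b /E Ha /E Hb; apply/E; move: Ha Hb; rewrite /phi rmorphD /= => -> ->; rewrite addr0.
- by move=> r a /E Ha; apply/E; move: Ha; rewrite /phi rmorphM /= => ->; rewrite mulr0.
- by move/E; rewrite /phi rmorph1 => /eqP; rewrite oner_eq0.
- move=> a b /E; rewrite /phi rmorphM /= => /eqP; rewrite mulf_eq0.
  by case/orP => /eqP H; [left|right]; apply/E.
Qed.


Lemma L1 d : vnum_at I d ->
  exists T, [/\ stable T, vertex_cover e (NS T) & (#|T| <= d)%N].
Proof.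
case=> f [hf [P [[[_ [P1 Pp]] _] HP]]].
have fI : ~ I f.
  by move=> If; apply: P1; apply/HP; rewrite /colon mul1r.
have [m mf nem] : exists2 m, m \in msupp f & ~~ em m.
  apply/hasP; apply: contra_notT fI; rewrite -all_predC => /allP H.
  by apply: I_sup => m /H /negPn.
pose T := [set t | (0 < m t)%N].
exists T; split.
- apply/forallP=> t1; apply/implyP=> t1T; apply/forallP=> t2; apply/implyP=> t2T.
  apply: contra nem => e12; apply/existsP; exists t1; apply/existsP; exists t2.
  by move: t1T t2T; rewrite !inE e12 => -> ->.
- apply/forallP=> y; apply/forallP=> z; apply/implyP=> eyz.
  have Pyz : P ('X_y * 'X_z).
    by apply/HP; rewrite /colon mulrC; apply: Igen.
  suff key : forall x, P 'X_x -> x \in NS T.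
    by case: (Pp _ _ Pyz) => /key ->; rewrite ?orbT.
  move=> x /HP; rewrite /colon mulrC => /I_sub /(_ (U_(x) + m)%MM).
  rewrite (perm_mem (msuppMX _ _)) map_f // => /(_ isT).
  case/existsP=> i /existsP [j /and3P [eij]]; rewrite !mnmDE !mnm1E.
  have nm : forall a b, e a b -> (0 < m a)%N -> (0 < m b)%N -> False.
    by move=> a b eab ma mb; move/negP: nem; apply; apply/existsP; exists a;
      apply/existsP; exists b; rewrite eab ma mb.
  case: (x =P i) => [xi|_]; case: (x =P j) => [xj|_] /= Hi Hj.
  - by move: eij; rewrite -xi -xj (negbTE (eirr x)).
  - subst i; case: (posnP (m x)) => [mx0|mxp]; last by case: (nm _ _ eij mxp Hj).
    by rewrite inE; apply/existsP; exists j; rewrite inE Hj eij.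
  - subst j; case: (posnP (m x)) => [mx0|mxp]; last by case: (nm _ _ eij Hi mxp).
    by rewrite inE; apply/existsP; exists i; rewrite inE Hi esym eij.
  - by case: (nm _ _ eij Hi Hj).
- have hm : mdeg m = d := dhomog_mf hf mf.
  rewrite -hm (mdegE m) -sum1_card [leqLHS]big_mkcond /=.
  by apply: leq_sum => i _; rewrite inE; case: posnP.
Qed.
End Alg.

Section Comb.
Variables (n : nat) (e : rel 'I_n).
Hypothesis esym : forall x y, e x y = e y x.
Hypothesis eirr : forall x, ~~ e x x.

Lemma bigmin_le (T : eqType) (s : seq T) (P : pred T) (F : T -> nat) d x :
  x \in s -> P x -> (\big[minn/d]_(i <- s | P i) F i <= F x)%N.
Proof.
elim: s => [//|y s IH]; rewrite inE big_cons => /orP [/eqP <- ->|xs Px].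
  by rewrite geq_minl.
case: ifP => _; last exact: IH.
by rewrite (leq_trans (geq_minr _ _)) // IH.
Qed.

Lemma B1 (C : {set 'I_n}) : vertex_cover e C -> (beta e <= #|C|)%N.
Proof. by move=> cC; rewrite /beta; apply: bigmin_le; rewrite ?mem_index_enum. Qed.

Lemma B2 : exists C, vertex_cover e C /\ #|C| = beta e.
Proof.
have : beta e = n \/ exists C, vertex_cover e C /\ #|C| = beta e.
  rewrite /beta; elim/big_ind: _ => [|a b Ha Hb|C cC]; first by left.
  - by rewrite /minn; case: ifP.
  - by right; exists C.
case=> [bn|//]; exists setT; split; last by rewrite cardsT card_ord bn.
by apply/forallP=> i; apply/forallP=> j; rewrite in_setT implybT.
Qed.

Lemma cover_sub (C D : {set 'I_n}) : C \subset D -> vertex_cover e C -> vertex_cover e D.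
Proof.
move=> /subsetP CD /forallP cC; apply/forallP=> i; apply/forallP=> j.
apply/implyP=> eij; move: (cC i) => /forallP /(_ j); rewrite eij /=.
by case/orP => [/CD ->|/CD ->]; rewrite ?orbT.
Qed.

Lemma nonC_noadj (C : {set 'I_n}) a b : vertex_cover e C -> a \notin C -> b \notin C -> ~~ e a b.
Proof.
move=> /forallP cC aC bC; apply/negP => eab.
by move: (cC a) => /forallP /(_ b); rewrite eab (negbTE aC) (negbTE bC).
Qed.

Lemma min_nbr (C : {set 'I_n}) : vertex_cover e C -> #|C| = beta e ->
  forall c, c \in C -> exists s, (s \notin C) && e c s.
Proof.
move=> cC hC c cin; apply/existsP; apply: contraT => /existsPn H.
have cC' : vertex_cover e (C :\ c).
  apply/forallP=> i; apply/forallP=> j; apply/implyP=> eij.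
  move: (cC) => /forallP /(_ i) /forallP /(_ j); rewrite eij /= !inE.
  case: (i =P c) => [ic|_]; case: (j =P c) => [jc|_] //=.
  - by move: eij; rewrite ic jc (negbTE (eirr c)).
  - by move=> _; move: (H j); rewrite -ic eij andbT negbK.
  - by move=> _; rewrite orbF; move: (H i); rewrite -jc esym eij andbT negbK.
have := B1 cC'; rewrite -hC (cardsD1 c C) cin.
by rewrite add1n ltnn.
Qed.

Definition gsel (C : {set 'I_n}) (c : 'I_n) := odflt c [pick s | (s \notin C) && e c s].

Lemma gselP (C : {set 'I_n}) c : vertex_cover e C -> #|C| = beta e -> c \in C ->
  (gsel C c \notin C) && e c (gsel C c).
Proof.
move=> cC hC cin; rewrite /gsel; case: pickP => [s //|H].
by case: (min_nbr cC hC cin) => s; rewrite H.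
Qed.

Lemma C1 : exists T, [/\ stable e T, vertex_cover e (NS e T) & (#|T| <= beta e)%N].
Proof.
case: B2 => C [cC hC]; exists (gsel C @: C); split.
- apply/forallP=> t1; apply/implyP=> /imsetP [c1 c1C ->].
  apply/forallP=> t2; apply/implyP=> /imsetP [c2 c2C ->].
  by apply: (nonC_noadj cC); [case/andP: (gselP cC hC c1C)|case/andP: (gselP cC hC c2C)].
- eapply cover_sub; last exact cC; apply/subsetP=> c cin; rewrite inE; apply/existsP.
  exists (gsel C c); rewrite imset_f //=; by case/andP: (gselP cC hC cin).
- by rewrite -hC leq_imset_card.
Qed.


Lemma conn_sym x y : connect e x y = connect e y x.
Proof. by apply: sym_connect_sym => a b; apply: esym. Qed.

Definition star_b (C : {set 'I_n}) c :=
  [forall y in C, forall z in C, e y z == ((y == c) != (z == c))].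

Definition ctr (t : 'I_n) := odflt t [pick c in component e t | star_b (component e t) c].

Lemma ctrP t : is_star_on e (component e t) -> star_b (component e t) (ctr t).
Proof.
case=> c cin cst; rewrite /ctr; case: pickP => [c' /andP [] //|/(_ c)].
rewrite cin /= => /negbT /negP []; apply/forallP=> a; apply/implyP=> ain.
by apply/forallP=> b; apply/implyP=> bin; rewrite cst.
Qed.

Lemma C3 : (forall x, has_edge_in e (component e x) -> is_star_on e (component e x)) ->
  forall T, stable e T -> vertex_cover e (NS e T) -> (beta e <= #|T|)%N.
Proof.
move=> Hs T st /forallP cov.
suff cD : vertex_cover e (ctr @: T) by rewrite (leq_trans (B1 cD)) ?leq_imset_card.
have key : forall y z, e y z -> y \in NS e T -> (y \in ctr @: T) || (z \in ctr @: T).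
  move=> y z eyz; rewrite inE => /existsP [t /andP [tT eyt]].
  have yc : y \in component e t by rewrite inE conn_sym connect1.
  have zc : z \in component e t.
    by rewrite inE (connect_trans _ (connect1 eyz)) // conn_sym connect1.
  have : has_edge_in e (component e t) by exists y, z.
  move=> /Hs /ctrP /forallP /(_ y); rewrite yc => /forallP /(_ z).
  rewrite zc eyz /= eq_sym => /eqP.
  have ct : ctr t \in ctr @: T by rewrite imset_f.
  by case: (y =P ctr t) => [->|_]; case: (z =P ctr t) => [->|_] //= _; rewrite ct ?orbT.
apply/forallP=> y; apply/forallP=> z; apply/implyP=> eyz.
move: (cov y) => /forallP /(_ z); rewrite eyz /= => /orP [/(key _ _ eyz) //|].
have ezy : e z y by rewrite esym.
by move/(key _ _ ezy); rewrite orbC.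
Qed.


Lemma C2 x : has_edge_in e (component e x) -> ~ is_star_on e (component e x) ->
  exists T, [/\ stable e T, vertex_cover e (NS e T) & (#|T| < beta e)%N].
Proof.
move=> [y [z [yx zx eyz]]] nstar.
case: B2 => C [cC hC].
have gP := gselP cC hC.
have stS : forall a b, a \notin C -> b \notin C -> ~~ e a b.
  by move=> a b; exact: nonC_noadj cC.
case: (boolP [exists s, exists c1, exists c2, [&& s \notin C, c1 \in C, c2 \in C,
           c1 != c2, e s c1 & e s c2]]).
  case/existsP=> s /existsP [c1 /existsP [c2 /and5P [sC c1C c2C c12 /andP [e1 e2]]]].
  pose g' c := if (c == c1) || (c == c2) then s else gsel C c.
  have g'P : forall c, c \in C -> (g' c \notin C) && e c (g' c).
    move=> c cin; rewrite /g'; case: (c =P c1) => [->|_] /=; first by rewrite sC esym.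
    case: (c =P c2) => [->|_] /=; first by rewrite sC esym.
    exact: gP.
  exists (g' @: C); split.
  - apply/forallP=> t1; apply/implyP=> /imsetP [a1 a1C ->].
    apply/forallP=> t2; apply/implyP=> /imsetP [a2 a2C ->].
    by apply: stS; [case/andP: (g'P _ a1C)|case/andP: (g'P _ a2C)].
  - eapply cover_sub; last exact cC; apply/subsetP=> c cin; rewrite inE; apply/existsP.
    exists (g' c); rewrite imset_f //=; by case/andP: (g'P _ cin).
  - rewrite -hC ltn_neqAle leq_imset_card andbT; apply/negP => /imset_injP inj.
    move/negP: c12; apply; apply/eqP; apply: inj => //.
    by rewrite /g' !eqxx /= orbT.
move=> noA.
have noA' : forall s c1 c2, s \notin C -> c1 \in C -> c2 \in C -> e s c1 -> e s c2 -> c1 = c2.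
  move=> s c1 c2 sC c1C c2C e1 e2; apply/eqP; apply: contraNT noA => c12.
  apply/existsP; exists s; apply/existsP; exists c1; apply/existsP; exists c2.
  by rewrite sC c1C c2C c12 e1 e2.
case: (boolP [exists c1, exists c2, [&& c1 \in C, c2 \in C & e c1 c2]]).
  case/existsP=> c1 /existsP [c2 /and3P [c1C c2C e12]].
  have c12 : c1 != c2 by apply/eqP => E; move: e12; rewrite E (negbTE (eirr c2)).
  pose D := C :\ c1 :\ c2.
  exists (c1 |: (gsel C @: D)); split.
  have Dm : forall c, c \in D -> [/\ c \in C, c != c1 & c != c2].
    by move=> c; rewrite !inE => /and3P [-> -> ->].
  have tP : forall t, t \in c1 |: (gsel C @: D) -> t = c1 \/ (t \notin C /\ ~~ e t c1).
    move=> t; rewrite in_setU1 => /orP [/eqP ->|/imsetP [c cD ->]]; first by left.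
    case: (Dm _ cD) => cin cc1 _; case/andP: (gP _ cin) => gC egc; right; split=> //.
    apply/negP => eg1; move/eqP: cc1; apply; apply: (noA' (gsel C c)) => //.
    by rewrite esym.
  - apply/forallP=> t1; apply/implyP=> /tP t1P; apply/forallP=> t2; apply/implyP=> /tP t2P.
    case: t1P t2P => [->|[t1C t1c]] [->|[t2C t2c]] //.
    + by rewrite esym.
    + exact: stS.
  - have hlp : forall a b, e a b -> a \in C ->
        (a \in NS e (c1 |: (gsel C @: D))) || (b \in NS e (c1 |: (gsel C @: D))).
      move=> a b eab aC; case: (a =P c1) => [ac1|ac1].
        apply/orP; right; rewrite inE; apply/existsP; exists c1.
        by rewrite setU11 esym -ac1 eab.
      case: (a =P c2) => [ac2|ac2].
        apply/orP; left; rewrite inE; apply/existsP; exists c1.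
        by rewrite setU11 ac2 esym e12.
      apply/orP; left; rewrite inE; apply/existsP; exists (gsel C a).
      have aD : a \in D by rewrite !inE aC; apply/and3P; split=> //; apply/eqP.
      by rewrite inE imset_f ?orbT //=; case/andP: (gP _ aC).
    apply/forallP=> a; apply/forallP=> b; apply/implyP=> eab.
    move: (cC) => /forallP /(_ a) /forallP /(_ b); rewrite eab /= => /orP [aC|bC].
      exact: hlp.
    by rewrite orbC; apply: hlp => //; rewrite esym.
  - rewrite -hC (cardsD1 c1 C) c1C (cardsD1 c2 (C :\ c1)) !inE eq_sym c12 c2C /=.
    rewrite (leq_ltn_trans (leq_card_setU _ _)) // cards1 add1n ltnS.
    by rewrite add1n ltnS leq_imset_card.
move=> noB.
have noB' : forall c1 c2, c1 \in C -> c2 \in C -> ~~ e c1 c2.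
  move=> c1 c2 c1C c2C; apply: contraNN noB => e12.
  by apply/existsP; exists c1; apply/existsP; exists c2; rewrite c1C c2C e12.
exfalso; apply: nstar.
have [c [cC' cx]] : exists c, c \in C /\ c \in component e x.
  move: (cC) => /forallP /(_ y) /forallP /(_ z); rewrite eyz /= => /orP [yC|zC].
    by exists y.
  by exists z.
have Inv : forall u, connect e c u -> u = c \/ (u \notin C /\ e c u).
  move=> u /connectP [p pth ->] {u}.
  have step : forall a b, a = c \/ (a \notin C /\ e c a) -> e a b ->
      b = c \/ (b \notin C /\ e c b).
    move=> a b [->|[aC eca]] eab.
      right; split=> //; apply/negP => bC; by move: (noB' _ _ cC' bC); rewrite eab.
    left; symmetry; apply: (noA' a) => //.
      move: (cC) => /forallP /(_ a) /forallP /(_ b); rewrite eab /= (negbTE aC) //.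
    by rewrite esym.
  have gen : forall q a, a = c \/ (a \notin C /\ e c a) -> path e a q ->
      last a q = c \/ (last a q \notin C /\ e c (last a q)).
    elim=> [|b q IH] a Ha //= /andP [eab pq].
    by apply: IH => //; apply: step eab.
  by apply: gen => //; left.
exists c => //.
have cconn : forall u, u \in component e x -> connect e c u.
  move=> u; rewrite !inE => xu; move: cx; rewrite inE conn_sym => cx'.
  exact: connect_trans cx' xu.
move=> u w /cconn /Inv Hu /cconn /Inv Hw.
case: Hu => [->|[uC ecu]]; case: Hw => [->|[wC ecw]].
- by rewrite eqxx (negbTE (eirr c)).
- have wc : (w == c) = false by apply/negbTE; apply: contraNneq wC => ->.
  by rewrite eqxx wc ecw.
- have uc : (u == c) = false by apply/negbTE; apply: contraNneq uC => ->.
  by rewrite eqxx uc esym ecu.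
- have uc : (u == c) = false by apply/negbTE; apply: contraNneq uC => ->.
  have wc : (w == c) = false by apply/negbTE; apply: contraNneq wC => ->.
  by rewrite uc wc; apply/negbTE; apply: stS.
Qed.
End Comb.

Theorem theorem4p1 (K : fieldType) (n : nat) (e : rel 'I_n) :
  simple_graph e ->
  (exists i j, e i j) ->
  exists v : nat,
    is_vnumber (@edge_ideal K n e) v /\
    (v <= beta e)%N /\
    (v = beta e <->
       forall x : 'I_n, has_edge_in e (component e x) ->
         is_star_on e (component e x)).
Proof.
move=> [esym eirr] _.
have [T0 [st0 cv0 le0]] := C1 esym eirr.
have adm0 := L2 K esym eirr st0 cv0.
have [v [Hv Hmin]] : exists v, vnum_at (@edge_ideal K n e) v /\
    forall d, vnum_at (@edge_ideal K n e) d -> (v <= d)%N.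
  suff : forall k d, (d <= k)%N -> vnum_at (@edge_ideal K n e) d -> exists v,
      vnum_at (@edge_ideal K n e) v /\ forall d, vnum_at (@edge_ideal K n e) d -> (v <= d)%N.
    by move=> H; apply: (H #|T0| #|T0|) => //; apply: leqnn.
  elim=> [|k IH] d.
    by rewrite leqn0 => /eqP -> H; exists 0%N; split.
  move=> dk Hd.
  case: (classic (exists d', (d' < d)%N /\ vnum_at (@edge_ideal K n e) d')).
    by case=> d' [d'd Hd']; apply: (IH d') => //; rewrite -ltnS (leq_trans d'd).
  move=> H; exists d; split=> // d' Hd'; rewrite leqNgt; apply/negP => d'd.
  by apply: H; exists d'.
exists v; split; first by split.
have vle : (v <= beta e)%N by apply: leq_trans (Hmin _ adm0) le0.
split=> //; split.
  move=> veq x hx; apply: NNPP => ns.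
  have [T [st cv lt]] := C2 esym eirr hx ns.
  have := Hmin _ (L2 K esym eirr st cv); rewrite veq leqNgt lt //.
move=> Hs; have [T [st cv le]] := L1 esym eirr Hv.
apply/eqP; rewrite eqn_leq vle /=.
exact: (leq_trans (C3 esym Hs st cv) le).
Qed.
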